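(* Consider an additive random utility model with $n$ alternatives, i.e. a random vector $\epsilon=(\epsilon^{(1)},\dots,\epsilon^{(n)})^T$ such that (i) $\epsilon$ has zero mean, its joint distribution is absolutely continuous with respect to Lebesgue measure and fully supported on $\mathbb{R}^n$; and (ii) for all $k\neq m$ the density $g_{k,m}$ of the difference $\epsilon^{(m)}-\epsilon^{(k)}$ attains its maximum at some point $\bar z_{k,m}\in\mathbb{R}$ (a mode). Let $E(u)=\mathbb{E}_\epsilon\left(\max_{1\le i\le n} u^{(i)}+\epsilon^{(i)}\right)$ be the surplus function and, for $\eta>0$, let $\tilde E(U;\eta)=\eta\, E(U/\eta)$. Assume $\mathbb{E}\left(\max_{1\le i\le n}\epsilon^{(i)}\right)\le \alpha$. Consider the following online procedure over $T$ rounds: set $U_0=\mathbf{0}$; for $t=1,\dots,T$ the agent chooses $x_t=\nabla\tilde E(U_{t-1};\eta)\in\Delta_n$, then an (possibly adversarial) reward vector $u_t\in\mathbb{R}^n$ with $\|u_t\|_\infty\le K$ is revealed, the agent gains $\langle x_t,u_t\rangle$, and $U_t=U_{t-1}+u_t$. Define the regret $R(T)=\max_{x\in\Delta_n}\langle x,U_T\rangle-\sum_{t=1}^T\langle x_t,u_t\rangle$. Then, with $L=2\sum_{i=1}^n\sum_{j\neq i} g_{i,j}(\bar z_{i,j})$, \[ R(T)\le \eta\cdot\alpha+\frac{L\cdot K^2\cdot T}{\eta}. \] Optimizing over the scaling parameter $\eta$ yields $R(T)\le 2\sqrt{\alpha\, L\, T}\cdot K$; in particular the procedure is Hannan-consistent,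 i.e. $R(T)/T\to 0$.
   Context: $\Delta_n=\{p\in\mathbb{R}^n: \sum_i p^{(i)}=1,\ p^{(i)}\ge 0\}$ is the probability simplex; $\mathbf{0}$ is the zero vector; $\|u\|_\infty=\max_i|u^{(i)}|$. The parameter $\eta$ is a fixed positive step size (the optimized bound corresponds to choosing $\eta$ depending on $T$, $K$, $L$, $\alpha$). *)

(* Defs.v *)
From HB Require Import structures.
From mathcomp Require Import all_boot all_order all_algebra.
From mathcomp Require Import all_classical all_reals all_analysis.
Set Implicit Arguments. Unset Strict Implicit. Unset Printing Implicit Defensive.
Import Order.TTheory GRing.Theory Num.Theory.
Import numFieldNormedType.Exports.
Local Open Scope classical_set_scope.
Local Open Scope ring_scope.

Section ARUM.
Variable R : realType.

Definition lebesgue_null (n : nat) (A : set ('I_n -> R)) : Prop :=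
  forall e : R, 0 < e ->
    exists (a b : nat -> 'I_n -> R),
      (forall k i, a k i <= b k i) /\
      A `<=` \bigcup_k [set x | forall i, a k i <= x i <= b k i] /\
      (\sum_(0 <= k <oo) (\prod_(i < n) (b k i - a k i))%:E < e%:E)%E.

Definition simplex (n : nat) : set 'rV[R]_n :=
  [set p | (forall i, 0 <= p 0 i) /\ \sum_(i < n) p 0 i = 1].

Definition dotp (n : nat) (x y : 'rV[R]_n) : R := \sum_(i < n) x 0 i * y 0 i.

Definition surplus d (Omega : measurableType d) (P : probability Omega R)
  (n : nat) (eps : 'I_n -> Omega -> R) (u : 'rV[R]_n) : R :=
  fine (\int[P]_w (\big[Order.max/-oo%E]_(i < n) ((u 0 i + eps i w)%:E))%E).

Definition surplus_scaled d (Omega : measurableType d) (P : probability Omega R)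
  (n : nat) (eps : 'I_n -> Omega -> R) (eta : R) (U : 'rV[R]_n) : R :=
  eta * surplus P eps (eta^-1 *: U).

Definition grad (n : nat) (f : 'rV[R]_n -> R) (U : 'rV[R]_n) : 'rV[R]_n :=
  \row_(i < n) 'D_(delta_mx 0 i) f U.

Definition cumul (n : nat) (u : nat -> 'rV[R]_n) (t : nat) : 'rV[R]_n :=
  \sum_(1 <= s < t.+1) u s.

End ARUM.

(* Main.v *)
Require Import Defs.
From HB Require Import structures.
From mathcomp Require Import all_boot all_order all_algebra.
From mathcomp Require Import all_classical all_reals all_analysis.
From mathcomp Require Import ring lra.
Import Order.TTheory GRing.Theory Num.Theory.
Import numFieldNormedType.Exports.
Local Open Scope classical_set_scope.
Local Open Scope ring_scope.
Set Implicit Arguments. Unset Strict Implicit. Unset Printing Implicit Defensive.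

Section Comb.
Variables (R : realType) (n : nat).
Implicit Types (x : 'I_n.+1 -> R).

Definition vmax x : R := fine (\big[Order.max/-oo%E]_i (x i)%:E).

Lemma vmaxE x : exists2 i, vmax x = x i &
  (\big[Order.max/-oo%E]_i (x i)%:E = (x i)%:E)%E.
Proof.
have [i _ E] := @eq_bigmax _ _ _ (-oo%E) ord0 xpredT (fun i => (x i)%:E) isT
  (fun i _ => leNye _).
by exists i; rewrite /vmax E.
Qed.

Lemma vmax_ge x i : x i <= vmax x.
Proof.
have [k -> E] := vmaxE x.
by rewrite -lee_fin -E; apply: le_bigmax.
Qed.

Definition first_max x (i : 'I_n.+1) : bool :=
  [forall j : 'I_n.+1, if (j < i)%N then x j < x i else x j <= x i].

Lemma first_max_ge x i : first_max x i -> forall j, x j <= x i.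
Proof.
move=> /forallP H j; have := H j; case: ifP => _ // /ltW //.
Qed.

Lemma first_max_vmax x i : first_max x i -> vmax x = x i.
Proof.
move=> H; apply/eqP; rewrite eq_le vmax_ge andbT.
have [k -> _] := vmaxE x; exact: first_max_ge.
Qed.

Lemma first_max_uniq x i j : first_max x i -> first_max x j -> i = j.
Proof.
move=> Hi Hj; apply/eqP; rewrite -val_eqE /=.
have Gi := first_max_ge Hi; have Gj := first_max_ge Hj.
case: (ltngtP i j) => // ij.
  by move/forallP: Hj => /(_ i); rewrite ij => /lt_le_trans /(_ (Gi j)); rewrite ltxx.
by move/forallP: Hi => /(_ j); rewrite ij => /lt_le_trans /(_ (Gj i)); rewrite ltxx.
Qed.

Lemma first_max_ex x : exists i, first_max x i.
Proof.
have [k Hk _] := vmaxE x.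
pose Pm := fun i => vmax x <= x i.
have Pk : Pm k by rewrite /Pm Hk.
case: (arg_minnP (fun i : 'I_n.+1 => val i) Pk) => i Pi Hmin.
exists i; apply/forallP => j.
have xi : x i = vmax x by apply/eqP; rewrite eq_le vmax_ge; exact: Pi.
case: ifP => ji; last by rewrite xi vmax_ge.
rewrite ltNge; apply/negP => Hj.
have : Pm j by rewrite /Pm -xi.
by move/Hmin; rewrite leqNgt ji.
Qed.

Lemma sum_first_max x : \sum_i ((first_max x i)%:R : R) = 1.
Proof.
have [i Hi] := first_max_ex x.
rewrite (bigD1 i) //= Hi big1 ?addr0 // => j ji.
case: (boolP (first_max x j)) => // Hj.
by move: ji; rewrite (first_max_uniq Hi Hj) eqxx.
Qed.

End Comb.

Lemma bigsetI_mem (T : Type) (I : eqType) (r : seq I) (F : I -> set T) (w : T) :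
  (\big[setI/setT]_(j <- r) F j) w <-> (forall j, j \in r -> F j w).
Proof.
elim: r => [|a r IH]; first by rewrite big_nil; split.
rewrite big_cons; split.
  by move=> [Fa /IH H] j; rewrite inE => /orP[/eqP->|jr] //; apply: H.
by move=> H; split; [apply: H; rewrite mem_head|apply/IH => j jr; apply: H; rewrite inE jr orbT].
Qed.

Section Prob.
Variables (R : realType) (d : measure_display) (Omega : measurableType d).
Variables (P : probability Omega R) (n : nat) (eps : 'I_n.+1 -> Omega -> R).
Hypothesis meps : forall i, measurable_fun setT (eps i).
Hypothesis ieps : forall i, P.-integrable setT (fun w => (eps i w)%:E).

Lemma mpre (f : Omega -> R) (A : set R) : measurable_fun setT f ->
  measurable A -> measurable [set w | A (f w)].
Proof. by move=> mf mA; have := mf measurableT A mA; rewrite setTI. Qed.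

Lemma mset_lt (f g : Omega -> R) : measurable_fun setT f -> measurable_fun setT g ->
  measurable [set w | f w < g w].
Proof.
move=> mf mg.
have -> : [set w | f w < g w] = [set w | `]0, +oo[%classic ((g \- f) w)].
  by apply/seteqP; split => w /=; rewrite in_itv /= andbT subr_gt0.
by apply: mpre; [exact: measurable_realfun.measurable_funB|exact: measurable_itv].
Qed.

Lemma mset_le (f g : Omega -> R) : measurable_fun setT f -> measurable_fun setT g ->
  measurable [set w | f w <= g w].
Proof.
move=> mf mg.
have -> : [set w | f w <= g w] = [set w | `[0, +oo[%classic ((g \- f) w)].
  by apply/seteqP; split => w /=; rewrite in_itv /= andbT subr_ge0.
by apply: mpre; [exact: measurable_realfun.measurable_funB|exact: measurable_itv].
Qed.

Definition xg (c : 'I_n.+1 -> R) (b : R) (w : Omega) : 'I_n.+1 -> R :=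
  fun i => c i + b * eps i w.

Lemma mxg c b i : measurable_fun setT (fun w => xg c b w i).
Proof.
apply: measurable_realfun.measurable_funD; first exact: measurable_cst.
by apply: measurable_realfun.measurable_funM; [exact: measurable_cst|exact: meps].
Qed.

Lemma ixg c b i : P.-integrable setT (EFin \o (fun w => xg c b w i)).
Proof.
apply: (eq_integrable measurableT ((EFin \o cst (c i)) \+ (fun w : Omega => (b%:E * (eps i w)%:E)%E))); first by move=> w _; rewrite /= ?EFinD ?EFinM.
apply: integrableD => //; first exact: finite_measure_integrable_cst.
exact: integrableZl.
Qed.

Definition Sg c b (i : 'I_n.+1) := [set w | first_max (xg c b w) i].

Lemma mSg c b i : measurable (Sg c b i).
Proof.
have -> : Sg c b i = \big[setI/setT]_(j <- index_enum 'I_n.+1)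
    [set w | if (j < i)%N then xg c b w j < xg c b w i else xg c b w j <= xg c b w i].
  apply/seteqP; split => w /=.
    move=> /forallP H; apply/bigsetI_mem => j _; exact: H.
  by move/bigsetI_mem => H; apply/forallP => j; apply: H; rewrite mem_index_enum.
apply: bigsetI_measurable => j _; case: (j < i)%N.
  exact: mset_lt (mxg _ _ _) (mxg _ _ _).
exact: mset_le (mxg _ _ _) (mxg _ _ _).
Qed.

Lemma vmax_decomp c b w :
  vmax (xg c b w) = \sum_i \1_(Sg c b i) w * xg c b w i.
Proof.
have [i Hi] := first_max_ex (xg c b w).
rewrite (bigD1 i) //= big1 ?addr0.
  by rewrite indicE mem_set // mul1r (first_max_vmax Hi).
move=> j ji; rewrite indicE; case: (boolP (w \in Sg c b j)); last by rewrite mul0r.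
by rewrite inE /Sg /= => Hj; move: ji; rewrite (first_max_uniq Hi Hj) eqxx.
Qed.

Lemma iind (A : set Omega) : measurable A -> P.-integrable setT (EFin \o \1_A).
Proof. by move=> mA; exact: (integrable_indic P mA). Qed.

Lemma mvmax c b : measurable_fun setT (fun w => vmax (xg c b w)).
Proof.
rewrite (_ : (fun w => _) = (fun w => \sum_i \1_(Sg c b i) w * xg c b w i)).
  apply: measurable_fun_approximation.measurable_sum => i; apply: measurable_realfun.measurable_funM.
    exact/measurable_realfun.measurable_indic/mSg.
  exact: mxg.
by apply/funext => w; rewrite vmax_decomp.
Qed.

Lemma ivmax c b : P.-integrable setT (EFin \o (fun w => vmax (xg c b w))).
Proof.
apply: (eq_integrable measurableT (fun w => (\sum_(i <- index_enum 'I_n.+1)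
   ((EFin \o \1_(Sg c b i)) \* (EFin \o (fun w => xg c b w i))) w)%E)); first by move=> w _; rewrite /= vmax_decomp -sumEFin; apply: eq_bigr => i _; rewrite /= ?EFinM.
apply: (integrable_sum measurableT) => i _; apply: (integrableMr measurableT).
- exact/measurable_realfun.measurable_indic/mSg.
- exists 1; split => // x x1 w _ /=; rewrite indicE; case: (_ \in _) => /=.
    by rewrite normr1 ltW.
  by rewrite normr0; apply: ltW; apply: lt_trans x1.
- exact: ixg.
Qed.

End Prob.

Section Prob3.
Variables (R : realType) (d : measure_display) (Omega : measurableType d).
Variables (P : probability Omega R) (n : nat) (eps : 'I_n.+1 -> Omega -> R).
Hypothesis meps : forall i, measurable_fun setT (eps i).
Hypothesis ieps : forall i, P.-integrable setT (fun w => (eps i w)%:E).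

Local Notation xg := (xg eps).
Local Notation Sg := (Sg eps).

Definition Phi c b := \int[P]_w vmax (xg c b w).
Definition pg c b i := fine (P (Sg c b i)).

Lemma Rint_ind (A : set Omega) : measurable A -> \int[P]_w \1_A w = fine (P A).
Proof. by move=> mA; rewrite /Rintegral integral_indic // setIT. Qed.

Lemma Rintegral_sum (I : Type) (s : seq I) (f : I -> Omega -> R) :
  (forall i, P.-integrable setT (EFin \o f i)) ->
  \int[P]_w (\sum_(i <- s) f i w) = \sum_(i <- s) \int[P]_w f i w.
Proof.
move=> fi; elim: s => [|a s IH].
  rewrite big_nil (@eq_Rintegral _ _ _ P setT (fun _ => 0)); last by move=> w _; rewrite big_nil.
  by rewrite Rintegral_cst // mul0r.
rewrite big_cons -IH -RintegralD //; first by apply: eq_Rintegral => w _; rewrite big_cons.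
apply: (eq_integrable measurableT (fun w => (\sum_(i <- s) (EFin \o f i) w)%E)); first by move=> w _; rewrite /= ?sumEFin.
exact: (integrable_sum measurableT).
Qed.

Lemma sum_ind_sel c b w i (f : 'I_n.+1 -> R) : Sg c b i w ->
  \sum_j \1_(Sg c b j) w * f j = f i.
Proof.
move=> Hi; rewrite (bigD1 i) //= big1 ?addr0.
  by rewrite indicE mem_set // mul1r.
move=> j ji; rewrite indicE; case: (boolP (w \in Sg c b j)); last by rewrite mul0r.
by rewrite inE /Sg /= => Hj; move: ji; rewrite (first_max_uniq Hi Hj) eqxx.
Qed.

Lemma iindc c b i r : P.-integrable setT (EFin \o (fun w => \1_(Sg c b i) w * r)).
Proof.
apply: (eq_integrable measurableT (fun w => (EFin \o \1_(Sg c b i)) w * r%:E)%E); first by move=> w _; rewrite /= ?EFinM.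
by apply: integrableZr => //; apply: iind; apply: mSg.
Qed.

Lemma isumind c b (r : 'I_n.+1 -> R) :
  P.-integrable setT (EFin \o (fun w => \sum_i \1_(Sg c b i) w * r i)).
Proof.
apply: (eq_integrable measurableT (fun w => (\sum_(i <- index_enum 'I_n.+1)
   (EFin \o (fun w => (\1_(Sg c b i) w * r i)%R)) w)%E)); first by move=> w _; rewrite /= ?sumEFin.
by apply: (integrable_sum measurableT) => i _; apply: iindc.
Qed.

Definition exc c (dl : 'I_n.+1 -> R) b w :=
  vmax (xg (fun i => c i + dl i) b w) - vmax (xg c b w)
  - \sum_i \1_(Sg c b i) w * dl i.

Lemma iexc c dl b : P.-integrable setT (EFin \o exc c dl b).
Proof.
pose F1 := (EFin \o (fun w => vmax (xg (fun i => c i + dl i) b w))).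
pose F2 := (EFin \o (fun w => vmax (xg c b w))).
pose F3 := (EFin \o (fun w => (\sum_i \1_(Sg c b i) w * dl i)%R)).
have H : P.-integrable setT ((F1 \- F2) \- F3)%E.
  apply: integrableB => //; last exact: isumind.
  by apply: integrableB => //; apply: ivmax.
apply: (eq_integrable measurableT _ _ _ H).
by move=> w _; rewrite /F1 /F2 /F3 /= /exc ?EFinB.
Qed.

Lemma exc_eq c dl b : Phi (fun i => c i + dl i) b - Phi c b - \sum_i pg c b i * dl i
  = \int[P]_w exc c dl b w.
Proof.
have i1 := ivmax meps ieps (fun i => c i + dl i) b.
have i2 := ivmax meps ieps c b.
have i3 := isumind c b dl.
pose F1 := (EFin \o (fun w => vmax (xg (fun i => c i + dl i) b w))).
pose F2 := (EFin \o (fun w => vmax (xg c b w))).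
have H : P.-integrable setT (F1 \- F2)%E by apply: integrableB.
have i12 : P.-integrable setT (EFin \o (fun w =>
    vmax (xg (fun i => c i + dl i) b w) - vmax (xg c b w))).
  apply: (eq_integrable measurableT _ _ _ H).
  by move=> w _; rewrite /F1 /F2 /= ?EFinB.
rewrite /exc /Phi (RintegralB measurableT i12 i3) (RintegralB measurableT i1 i2).
congr (_ - _); rewrite Rintegral_sum; last by move=> i; apply: iindc.
apply: eq_bigr => i _; rewrite RintegralZr; last exact: iind (mSg _ _ _ _).
by rewrite Rint_ind //; apply: mSg. all: try exact: measurableT.
Qed.

Lemma exc_sel c dl b w i : Sg c b i w ->
  exc c dl b w = vmax (xg (fun i => c i + dl i) b w) - xg (fun i => c i + dl i) b w i.
Proof.
move=> Hi; rewrite /exc (sum_ind_sel _ Hi) (first_max_vmax Hi) /xg.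
by ring.
Qed.

Lemma exc_ge0 c dl b w : 0 <= exc c dl b w.
Proof.
have [i Hi] := first_max_ex (xg c b w).
by rewrite (exc_sel dl Hi) subr_ge0 vmax_ge.
Qed.

Lemma lower c dl b : \sum_i pg c b i * dl i <= Phi (fun i => c i + dl i) b - Phi c b.
Proof.
rewrite -subr_ge0 exc_eq; apply: Rintegral_ge0 => w _; exact: exc_ge0.
Qed.

End Prob3.

Section Real.
Variable R : realType.

Lemma layer (N : nat) (h y : R) : 0 <= h -> y <= N%:R * h ->
  Num.max 0 y <= h * \sum_(k < N) (((k%:R * h < y)%R)%:R : R).
Proof.
move=> h0; elim: N y => [|N IH] y.
  by rewrite mul0r big_ord0 mulr0 => y0; rewrite ge_max lexx.
move=> yN; rewrite big_ord_recl /= mul0r.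
under eq_bigr => k _ do rewrite /bump /= add1n -addn1 natrD mulrDl mul1r -ltrBrDr.
have s0 : 0 <= \sum_(k < N) (((k%:R * h < y - h)%R)%:R : R) by apply: sumr_ge0 => k _; case: (_ < _).
case: (leP y 0) => y0.
  by apply: mulr_ge0 => //; apply: addr_ge0.
rewrite (_ : true%:R = 1) // mulrDr mulr1.
have yN' : y - h <= N%:R * h by move: yN; rewrite -natr1; lra.
have H := IH (y - h) yN'.
have : y - h <= Num.max 0 (y - h) by rewrite le_max lexx orbT.
lra.
Qed.

Lemma sum_Nk (N : nat) : \sum_(k < N) ((N - k)%:R : R) = (N%:R * (N%:R + 1)) / 2.
Proof.
elim: N => [|N IH]; first by rewrite big_ord0 mul0r mul0r.
rewrite big_ord_recl /= subn0.
under eq_bigr => k _ do rewrite /bump /= add1n subSS.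
by rewrite IH -natr1; field.
Qed.

End Real.

Section Upper.
Variables (R : realType) (d : measure_display) (Omega : measurableType d).
Variables (P : probability Omega R) (n : nat) (eps : 'I_n.+1 -> Omega -> R).
Hypothesis meps : forall i, measurable_fun setT (eps i).
Hypothesis ieps : forall i, P.-integrable setT (fun w => (eps i w)%:E).
Variables (g : 'I_n.+1 -> 'I_n.+1 -> R -> R) (G : 'I_n.+1 -> 'I_n.+1 -> R).
Hypothesis mg : forall k m, k != m -> measurable_fun setT (g k m).
Hypothesis g0 : forall k m, k != m -> forall z, 0 <= g k m z.
Hypothesis hg : forall k m, k != m -> forall A : set R, measurable A ->
  P [set w | A (eps m w - eps k w)] = (\int[lebesgue_measure]_(z in A) (g k m z)%:E)%E.
Hypothesis gG : forall k m, k != m -> forall z, g k m z <= G k m.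

Local Notation xg := (xg eps).
Local Notation Sg := (Sg eps).

Lemma G0 k m : k != m -> 0 <= G k m.
Proof. by move=> km; apply: le_trans (g0 km 0) (gG km 0). Qed.

Lemma mYset k m (A : set R) : measurable A -> measurable [set w | A (eps m w - eps k w)].
Proof.
move=> mA; apply: (mpre (f := eps m \- eps k)) => //.
exact: measurable_realfun.measurable_funB.
Qed.

Lemma prob_itv k m (l r : R) : k != m -> l <= r ->
  fine (P [set w | `]l, r]%classic (eps m w - eps k w)]) <= G k m * (r - l).
Proof.
move=> km lr.
have mA := mYset k m (measurable_itv `]l, r]).
have fin : P [set w | `]l, r]%classic (eps m w - eps k w)] \is a fin_num.
  by rewrite fin_num_measure.
rewrite -lee_fin fineK // hg //.
have -> : (G k m * (r - l))%:E = (\int[lebesgue_measure]_(z in `]l, r]) (G k m)%:E)%E.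
  rewrite integral_cst //= lebesgue_measure_itv /= lte_fin.
  case: ltP => lr'; first by rewrite -EFinB -EFinM.
  have -> : r = l by apply/eqP; rewrite eq_le lr' lr.
  by rewrite subrr mulr0 mule0.
apply: ge0_le_integral => //.
- by move=> z _; rewrite lee_fin; exact: g0.
- apply/measurable_realfun.measurable_EFinP; exact: measurable_funS (mg km).
- by move=> z _; rewrite lee_fin; exact: gG.
Qed.


Section Phi.
Variables (c dl : 'I_n.+1 -> R) (b : R) (N : nat).
Hypothesis b0 : 0 < b.
Hypothesis N0 : (0 < N)%N.

Definition Dd i j := dl j - dl i.
Definition tt i j := (c i - c j) / b.
Definition hh i j := Dd i j / (b * N%:R).
Definition Ak i j (k : 'I_N) :=
  [set w | `](tt i j - (N - k)%:R * hh i j), tt i j]%classic (eps j w - eps i w)].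
Definition phi i j : Omega -> R :=
  if 0 < Dd i j then (fun w => b * hh i j * \sum_(k < N) \1_(Ak i j k) w)
  else (fun=> 0).

Lemma mAk i j k : measurable (Ak i j k).
Proof. exact: mYset (measurable_itv _). Qed.

Lemma hh_ge0 i j : 0 < Dd i j -> 0 <= hh i j.
Proof.
move=> D0; rewrite /hh; apply: divr_ge0; first exact: ltW.
by apply: mulr_ge0; [exact: ltW|exact: ler0n].
Qed.

Lemma phi_ge0 i j w : 0 <= phi i j w.
Proof.
rewrite /phi; case: ifP => // D0.
apply: mulr_ge0; first by apply: mulr_ge0; [exact: ltW|exact: hh_ge0].
by apply: sumr_ge0 => k _; rewrite indicE ler0n.
Qed.

Lemma phi_pt i j w : Sg c b i w ->
  Num.max 0 (xg (fun i => c i + dl i) b w j - xg (fun i => c i + dl i) b w i) <= phi i j w.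
Proof.
move=> Hi; have := first_max_ge Hi j; rewrite /xg => Hc.
have bN : b * N%:R != 0 by rewrite mulf_neq0 // ?gt_eqF // ?pnatr_eq0 -?lt0n //; rewrite ltr0n.
have bn0 : b != 0 by rewrite gt_eqF.
rewrite /phi; case: ifP => D0; last first.
  rewrite ge_max lexx /=; move/negbT: D0; rewrite -leNgt /Dd => D0; lra.
set Y := eps j w - eps i w.
have YT : Y <= tt i j.
  rewrite /tt ler_pdivlMr // /Y; lra.
set y := Y - (tt i j - N%:R * hh i j).
have Nn0 : N%:R != 0 :> R by rewrite pnatr_eq0 -lt0n.
have hN : N%:R * hh i j = Dd i j / b.
  by rewrite /hh; field; rewrite bn0 Nn0.
have Zy : c j + dl j + b * eps j w - (c i + dl i + b * eps i w) = b * y.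
  by rewrite /y hN /tt /Y /Dd; field.
rewrite Zy.
have -> : Num.max 0 (b * y) = b * Num.max 0 y by rewrite maxr_pMr ?ltW // mulr0.
rewrite -mulrA ler_pM2l //.
have yN : y <= N%:R * hh i j by rewrite /y; lra.
apply: (le_trans (layer (hh_ge0 D0) yN)).
have hp : 0 < hh i j.
  by rewrite /hh divr_gt0 // mulr_gt0 // ltr0n.
rewrite ler_pM2l //.
apply: ler_sum => k _; rewrite indicE le_eqVlt; apply/orP; left; apply/eqP.
congr (_%:R).
have kN : (k <= N)%N by exact: ltnW (ltn_ord k).
congr (nat_of_bool _); rewrite /Ak; apply/idP/idP => [H|/set_mem H]; [apply/mem_set|];
  move: H; rewrite /= ?in_itv /= ?YT ?andbT natrB // mulrBl;
  rewrite /y; set A := N%:R * hh i j; set B := k%:R * hh i j => H; unfold Y in *; lra.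
Qed.

Lemma iphi i j : P.-integrable setT (EFin \o phi i j).
Proof.
rewrite /phi; case: ifP => _; last exact: finite_measure_integrable_cst.
apply: (eq_integrable measurableT (fun w => ((b * hh i j)%:E *
   (\sum_(k <- index_enum 'I_N) (EFin \o \1_(Ak i j k)) w))%E));
  first by move=> w _; rewrite /= sumEFin EFinM.
apply: integrableZl => //; apply: (integrable_sum measurableT) => k _.
exact: iind (mAk _ _ _).
Qed.

Lemma int_phi i j : \int[P]_w phi i j w <=
  G i j * Dd i j ^+ 2 * (N%:R + 1) / (2 * b * N%:R).
Proof.
have Nn0 : N%:R != 0 :> R by rewrite pnatr_eq0 -lt0n.
have bn0 : b != 0 by rewrite gt_eqF.
rewrite /phi; case: ifP => D0; last first.
  rewrite Rintegral_cst // mul0r.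
  case: (eqVneq i j) => [->|ij]; first by rewrite /Dd subrr expr0n /= mulr0 !mul0r.
  apply: divr_ge0; last by apply: mulr_ge0; [apply: mulr_ge0 => //; exact: ltW|exact: ler0n].
  apply: mulr_ge0; last by apply: addr_ge0 => //; exact: ler0n.
  by apply: mulr_ge0; [exact: G0|exact: sqr_ge0].
have ij : i != j by apply: contraPneq D0 => ->; rewrite /Dd subrr ltxx.
rewrite RintegralZl //; last first.
  apply: (eq_integrable measurableT (fun w =>
   (\sum_(k <- index_enum 'I_N) (EFin \o \1_(Ak i j k)) w)%E));
  first by move=> w _; rewrite /= sumEFin.
  apply: (integrable_sum measurableT) => k _; exact: iind (mAk _ _ _).
rewrite Rintegral_sum; last by move=> k; exact: iind (mAk _ _ _).
have Hs : \sum_(k < N) \int[P]_w \1_(Ak i j k) w <=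
          \sum_(k < N) G i j * ((N - k)%:R * hh i j).
  apply: ler_sum => k _; rewrite Rint_ind; last exact: mAk.
  have := @prob_itv i j (tt i j - (N - k)%:R * hh i j) (tt i j) ij.
  have -> : tt i j - (tt i j - (N - k)%:R * hh i j) = (N - k)%:R * hh i j by ring.
  apply; rewrite lerBlDr lerDl; apply: mulr_ge0; [exact: ler0n|exact: hh_ge0].
have bh : 0 <= b * hh i j by apply: mulr_ge0; [exact: ltW|exact: hh_ge0].
apply: le_trans (ler_wpM2l bh Hs) _.
rewrite -mulr_sumr -mulr_suml sum_Nk /hh.
rewrite le_eqVlt; apply/orP; left; apply/eqP; field.
by rewrite bn0 Nn0.
Qed.

Lemma maxsum (x : 'I_n.+1 -> R) i : vmax x - x i <= \sum_j Num.max 0 (x j - x i).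
Proof.
have [k Hk _] := vmaxE x; rewrite Hk (bigD1 k) //=.
have s0 : 0 <= \sum_(j | j != k) Num.max 0 (x j - x i).
  by apply: sumr_ge0 => j _; rewrite le_max lexx.
have : x k - x i <= Num.max 0 (x k - x i) by rewrite le_max lexx orbT.
lra.
Qed.

Lemma exc_le w : exc eps c dl b w <= \sum_i \sum_j phi i j w.
Proof.
have [i Hi] := first_max_ex (xg c b w).
rewrite (exc_sel dl (Hi : Sg c b i w)).
apply: le_trans (maxsum _ i) _.
apply: (@le_trans _ _ (\sum_j phi i j w)).
  by apply: ler_sum => j _; exact: phi_pt.
rewrite [leRHS](bigD1 i) //= lerDl; apply: sumr_ge0 => k _; apply: sumr_ge0 => j _.
exact: phi_ge0.
Qed.

Lemma isumG (I : Type) (s : seq I) (f : I -> Omega -> R) :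
  (forall i, P.-integrable setT (EFin \o f i)) ->
  P.-integrable setT (EFin \o (fun w => \sum_(i <- s) f i w)).
Proof.
move=> fi; apply: (eq_integrable measurableT (fun w => (\sum_(i <- s) (EFin \o f i) w)%E));
  first by move=> w _; rewrite /= sumEFin.
exact: (integrable_sum measurableT).
Qed.

Lemma upper_int : \int[P]_w exc eps c dl b w <=
  \sum_i \sum_j G i j * Dd i j ^+ 2 * (N%:R + 1) / (2 * b * N%:R).
Proof.
have i2 : P.-integrable setT (EFin \o (fun w => \sum_i \sum_j phi i j w)).
  by apply: isumG => i; apply: isumG => j; exact: iphi.
apply: le_trans (le_Rintegral measurableT (iexc meps ieps c dl b) i2 (fun w _ => exc_le w)) _.
rewrite Rintegral_sum; last by move=> i; apply: isumG => j; exact: iphi.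
apply: ler_sum => i _; rewrite Rintegral_sum; last by move=> j; exact: iphi.
by apply: ler_sum => j _; exact: int_phi.
Qed.

End Phi.

Lemma upper c dl b N K : 0 < b -> (0 < N)%N -> (forall i, `|dl i| <= K) ->
  Phi P eps (fun i => c i + dl i) b - Phi P eps c b - \sum_i pg P eps c b i * dl i
  <= (N%:R + 1) / N%:R * (2 * \sum_i \sum_(j | j != i) G i j) * K ^+ 2 / b.
Proof.
move=> b0 N0 hK.
have K0 : 0 <= K by apply: le_trans (hK ord0).
have Nn0 : N%:R != 0 :> R by rewrite pnatr_eq0 -lt0n.
have bn0 : b != 0 by rewrite gt_eqF.
rewrite (exc_eq meps ieps); apply: le_trans (upper_int c dl b0 N0) _.
set C := (N%:R + 1) / (2 * b * N%:R).
have C0 : 0 <= C.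
  rewrite /C; apply: divr_ge0; first by apply: addr_ge0 => //; exact: ler0n.
  by apply: mulr_ge0; [apply: mulr_ge0 => //; exact: ltW|exact: ler0n].
apply: (@le_trans _ _ (\sum_i \sum_(j | j != i) G i j * (4 * K ^+ 2 * C))).
  apply: ler_sum => i _; rewrite (bigD1 i) //= /Dd subrr expr0n /= mulr0 !mul0r add0r.
  apply: ler_sum => j ji.
  have HD : Dd dl i j ^+ 2 <= 4 * K ^+ 2.
    have : `|dl j - dl i| <= 2 * K.
      by apply: le_trans (ler_normB _ _) _; rewrite mulr2n mulrDl mul1r lerD.
    rewrite ler_norml /Dd => /andP[H1 H2]; nra.
  have -> : G i j * Dd dl i j ^+ 2 * (N%:R + 1) / (2 * b * N%:R) = G i j * (Dd dl i j ^+ 2 * C)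
    by rewrite /C; ring.
  apply: ler_wpM2l; first by apply: G0; rewrite eq_sym.
  exact: ler_wpM2r.
rewrite le_eqVlt; apply/orP; left; apply/eqP.
under eq_bigr do rewrite -mulr_suml.
rewrite -mulr_suml /C; field.
by rewrite bn0 Nn0.
Qed.

End Upper.

Lemma norm_coord (R : realType) m (x : 'rV[R]_m) i : `|x 0 i| <= `|x|.
Proof.
have -> : `|x| = mx_norm x by [].
rewrite mx_normrE.
exact: (le_bigmax _ (fun ij : 'I_1 * 'I_m => `|x ij.1 ij.2|) (0, i)).
Qed.

Lemma aux_ineq (R : realType) (B e a : R) : 0 <= B -> 0 <= a -> a * (B + 1) < e ->
  B * a ^+ 2 <= e * a.
Proof. move=> B0 a0 h; nra. Qed.

Section Diff.
Variables (R : realType) (d : measure_display) (Omega : measurableType d).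
Variables (P : probability Omega R) (n : nat) (eps : 'I_n.+1 -> Omega -> R).
Hypothesis meps : forall i, measurable_fun setT (eps i).
Hypothesis ieps : forall i, P.-integrable setT (fun w => (eps i w)%:E).
Variables (g : 'I_n.+1 -> 'I_n.+1 -> R -> R) (G : 'I_n.+1 -> 'I_n.+1 -> R).
Hypothesis mg : forall k m, k != m -> measurable_fun setT (g k m).
Hypothesis g0 : forall k m, k != m -> forall z, 0 <= g k m z.
Hypothesis hg : forall k m, k != m -> forall A : set R, measurable A ->
  P [set w | A (eps m w - eps k w)] = (\int[lebesgue_measure]_(z in A) (g k m z)%:E)%E.
Hypothesis gG : forall k m, k != m -> forall z, g k m z <= G k m.
Variable (b : R).
Hypothesis b0 : 0 < b.

Definition Fb (U : 'rV[R]_n.+1) := Phi P eps (fun i => U 0 i) b.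
Definition pv (U : 'rV[R]_n.+1) : 'rV[R]_n.+1 := \row_i pg P eps (fun i => U 0 i) b i.
Definition Bc := 2 * (2 * \sum_i \sum_(j | j != i) G i j) / b.

Lemma F_bound U x : 0 <= Fb (x + U) - Fb U - \sum_i pv U 0 i * x 0 i <= Bc * `|x| ^+ 2.
Proof.
have -> : Fb (x + U) = Phi P eps (fun i => U 0 i + x 0 i) b.
  by rewrite /Fb; congr Phi; apply/funext => i; rewrite mxE addrC.
have -> : \sum_i pv U 0 i * x 0 i = \sum_i pg P eps (fun i => U 0 i) b i * x 0 i.
  by apply: eq_bigr => i _; rewrite mxE.
apply/andP; split.
  have := lower meps ieps (fun i => U 0 i) (fun i => x 0 i) b; rewrite /Fb; lra.
have := upper meps ieps mg g0 hg gG (fun i => U 0 i) (dl := fun i => x 0 i) b0 (isT : (0 < 1)%N)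
  (fun i => norm_coord x i).
rewrite /Fb /Bc; set S := \sum_i _.
have -> : (1%:R + 1) / 1%:R = 2 :> R by rewrite divr1.
by rewrite mulrAC.
Qed.

Definition ellf (U x : 'rV[R]_n.+1) : R := \sum_i pv U 0 i * x 0 i.

Lemma ellf_lin U : linear (ellf U).
Proof.
move=> a x y; rewrite /ellf (_ : a *: \sum_i pv U 0 i * x 0 i = a * \sum_i pv U 0 i * x 0 i) //.
rewrite mulr_sumr -big_split; apply: eq_bigr => i _; rewrite !mxE. by rewrite /= mulrDr mulrCA.
Qed.

Lemma Bc_ge0 : 0 <= Bc.
Proof.
rewrite /Bc; apply: divr_ge0; last exact: ltW.
apply: mulr_ge0 => //; apply: mulr_ge0 => //; apply: sumr_ge0 => i _.
by apply: sumr_ge0 => j ji; apply: (G0 g0 gG); rewrite eq_sym.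
Qed.

Lemma F_diff U : differentiable Fb U /\ forall v, 'd Fb U v = ellf U v.
Proof.
pose lM := GRing.isLinear.Build R _ _ _ (ellf U) (ellf_lin U).
pose L : {linear 'rV[R]_n.+1 -> R} := HB.pack (ellf U) lM.
have Lc : continuous L.
  apply: bounded_linear_continuous.
  exists (\sum_i `|pv U 0 i|); split; first exact: num_real.
  move=> M hM; apply: filterS (nbhs0_lt ltr01) => x hx /=.
  apply: ltW; apply: le_lt_trans hM.
  rewrite /ellf; apply: le_trans (ler_norm_sum _ _ _) _.
  apply: ler_sum => i _; rewrite normrM -[leRHS]mulr1; apply: ler_wpM2l => //.
  exact: ltW (le_lt_trans (norm_coord x i) hx).
have H : Fb \o shift U = cst (Fb U) + L +o_ 0 id.
  apply/eqaddoP => e e0.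
  have B1 : 0 < Bc + 1 by apply: ltr_wpDl Bc_ge0 ltr01.
  apply: filterS (nbhs0_lt (divr_gt0 e0 B1)) => x hx.
  have [h1 h2] := andP (F_bound U x).
  have -> : (Fb \o +%R^~ U - (cst (Fb U) + ellf U)) x = Fb (x + U) - Fb U - ellf U x.
    by rewrite /= opprD addrA.
  rewrite ger0_norm // /ellf; apply: le_trans h2 _.
  have a0 : 0 <= `|x| by [].
  move: hx; rewrite ltr_pdivlMr // => hx.
  exact: aux_ineq Bc_ge0 a0 hx.
split; first by apply/diff_locallyP; rewrite (diff_unique Lc H).
by move=> v; rewrite (diff_unique Lc H).
Qed.

Lemma F_grad U : grad Fb U = pv U.
Proof.
have [dF dE] := F_diff U.
apply/rowP => i; rewrite !mxE (deriveE _ dF) dE /ellf.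
rewrite (bigD1 i) //= !mxE !eqxx mulr1 big1 ?addr0 // => j ji.
by rewrite !mxE eqxx /= (negbTE ji) mulr0.
Qed.

Lemma pv_simplex U : simplex (pv U).
Proof.
split => [i|]; first by rewrite mxE fine_ge0 // measure_ge0.
have -> : \sum_i pv U 0 i = \sum_i \int[P]_w \1_(Sg eps (fun i => U 0 i) b i) w.
  by apply: eq_bigr => i _; rewrite mxE Rint_ind //; apply: mSg.
rewrite -Rintegral_sum; last by move=> i; exact: iind (mSg _ _ _ _).
rewrite (@eq_Rintegral _ _ _ P setT (fun _ => 1)); last first.
  move=> w _; rewrite -(sum_first_max (xg eps (fun i => U 0 i) b w)).
  apply: eq_bigr => i _; rewrite indicE; congr (_%:R); congr (nat_of_bool _).
  by apply/idP/idP => [/set_mem|H]; [|apply/mem_set].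
rewrite Rintegral_cst // mul1r; exact: (congr1 fine (probability_setT P)).
Qed.

End Diff.

Lemma bigmaxE (R : realType) n (x : 'I_n.+1 -> R) :
  (\big[Order.max/-oo%E]_i (x i)%:E)%E = (vmax x)%:E.
Proof. by have [i -> ->] := vmaxE x. Qed.

Lemma vmax_scale (R : realType) n (x : 'I_n.+1 -> R) (a : R) : 0 < a ->
  vmax (fun i => a * x i) = a * vmax x.
Proof.
move=> a0; have [i Hi] := first_max_ex x.
have Hi' : first_max (fun i => a * x i) i.
  apply/forallP => j; move/forallP: Hi => /(_ j).
  by case: (j < i)%N; rewrite ?ltr_pM2l ?ler_pM2l.
by rewrite (first_max_vmax Hi') (first_max_vmax Hi).
Qed.

Section Final.
Variables (R : realType) (d : measure_display) (Omega : measurableType d).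
Variables (P : probability Omega R) (n : nat) (eps : 'I_n.+1 -> Omega -> R).
Hypothesis meps : forall i, measurable_fun setT (eps i).
Hypothesis ieps : forall i, P.-integrable setT (fun w => (eps i w)%:E).
Hypothesis zeps : forall i, (\int[P]_w (eps i w)%:E = 0)%E.
Variable (eta : R).
Hypothesis eta0 : 0 < eta.

Lemma Et_eq : surplus_scaled P eps eta = Fb P eps eta.
Proof.
apply/funext => U; rewrite /surplus_scaled /surplus /Fb /Phi.
under eq_integral do rewrite bigmaxE.
have iv : P.-integrable setT (EFin \o (fun w => vmax (fun i => (eta^-1 *: U) 0 i + eps i w))).
  apply: (eq_integrable measurableT _ _ _ (ivmax meps ieps (fun i => (eta^-1 *: U) 0 i) 1)).
  by move=> w _; rewrite /xg /=; congr (_%:E); congr vmax; apply/funext => i; rewrite mul1r.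
rewrite -[fine _]/(Rintegral P setT _) -RintegralZl //.
apply: eq_Rintegral => w _; rewrite -vmax_scale //; congr vmax; apply/funext => i.
by rewrite /xg mxE mulrDr mulrA mulfV ?gt_eqF // mul1r.
Qed.

Lemma Fb_ge (U : 'rV[R]_n.+1) i : U 0 i <= Fb P eps eta U.
Proof.
rewrite /Fb /Phi.
have -> : U 0 i = \int[P]_w (xg eps (fun i => U 0 i) eta w i).
  rewrite /xg RintegralD //; last 2 first.
  - exact: finite_measure_integrable_cst.
  - apply: (eq_integrable measurableT (fun w => (eta%:E * (eps i w)%:E)%E)); first by [].
    exact: integrableZl.
  rewrite Rintegral_cst // RintegralZl //; last exact: ieps.
  have Z : \int[P]_x eps i x = 0 := congr1 fine (zeps i).
  have P1 : fine (P [set: Omega]) = 1 := congr1 fine (probability_setT P).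
  by rewrite Z P1 mulr0 addr0 mulr1.
apply: le_Rintegral => //; first exact: ixg.
  exact: ivmax.
by move=> w _; apply: vmax_ge.
Qed.

Lemma Fb0 alpha : (\int[P]_w (\big[Order.max/-oo%E]_(i < n.+1) (eps i w)%:E) <= alpha%:E)%E ->
  Fb P eps eta 0 <= eta * alpha.
Proof.
move=> ha; rewrite -Et_eq /surplus_scaled ler_pM2l // /surplus.
have -> : (fun w => \big[Order.max/-oo%E]_(i < n.+1) (((eta^-1 *: (0 : 'rV[R]_n.+1)) 0 i + eps i w)%:E))
   = (fun w => \big[Order.max/-oo%E]_(i < n.+1) (eps i w)%:E).
  by apply/funext => w; apply: eq_bigr => i _; rewrite !mxE mulr0 add0r.
rewrite -lee_fin fineK //.
under eq_integral do rewrite bigmaxE.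
apply: (integrable_fin_num measurableT).
apply: (eq_integrable measurableT _ _ _ (ivmax meps ieps (fun=> 0) 1)).
by move=> w _; rewrite /xg /=; congr (_%:E); congr vmax; apply/funext => i; rewrite mul1r add0r.
Qed.

End Final.

Unset Implicit Arguments.

Theorem theorem1 (R : realType) (d : measure_display) (Omega : measurableType d)
  (P : probability Omega R) (n : nat) (eps : 'I_n -> Omega -> R)
  (g : 'I_n -> 'I_n -> R -> R) (zbar : 'I_n -> 'I_n -> R)
  (alpha eta K : R) (T : nat) (u : nat -> 'rV[R]_n) :
  (0 < n)%N ->
  (* eps is a random vector with zero mean *)
  (forall i, measurable_fun setT (eps i)) ->
  (forall i, P.-integrable setT (fun w => (eps i w)%:E) /\
             (\int[P]_w (eps i w)%:E = 0)%E) ->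
  (* joint law absolutely continuous w.r.t. Lebesgue measure on R^n *)
  (forall A : set ('I_n -> R), lebesgue_null A ->
     exists B : set Omega, [/\ measurable B, P B = 0%E &
                              [set w | A (fun i => eps i w)] `<=` B]) ->
  (* joint law fully supported on R^n *)
  (forall a b : 'I_n -> R, (forall i, a i < b i) ->
     (0 < P (\bigcap_(i in [set: 'I_n]) [set w | (a i < eps i w < b i)%R]))%E) ->
  (* g k m is a density of eps^(m) - eps^(k), with a mode at zbar k m *)
  (forall k m, k != m ->
     [/\ forall z, 0 <= g k m z,
         measurable_fun setT (g k m),
         forall A : set R, measurable A ->
           P [set w | A (eps m w - eps k w)] =
           (\int[lebesgue_measure]_(z in A) (g k m z)%:E)%E
       & forall z, g k m z <= g k m (zbar k m)]) ->
  (* E(max_i eps^(i)) <= alpha *)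
  (\int[P]_w (\big[Order.max/-oo%E]_(i < n) (eps i w)%:E) <= alpha%:E)%E ->
  0 < eta ->
  (* adversarial rewards with sup-norm at most K *)
  (forall t, (1 <= t <= T)%N -> forall i, `|u t 0 i| <= K) ->
  let Et := surplus_scaled P eps eta in
  let x := fun t : nat => grad Et (cumul u t.-1) in
  let L := 2 * \sum_(i < n) \sum_(j < n | j != i) g i j (zbar i j) in
  (forall U : 'rV[R]_n, differentiable Et U /\ simplex (grad Et U)) /\
  sup [set dotp y (cumul u T) | y in @simplex R n]
    - \sum_(1 <= t < T.+1) dotp (x t) (u t)
  <= eta * alpha + L * K ^+ 2 * T%:R / eta.
Proof.
case: n eps g zbar u => [|n] eps g zbar u // _ meps hint _ _ hdens halpha eta0 hu.
move=> Et x L.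
have ieps i := (hint i).1.
have zeps i := (hint i).2.
pose G := fun k m => g k m (zbar k m).
have g0 : forall k m, k != m -> forall z, 0 <= g k m z.
  by move=> k m km; case: (hdens k m km).
have mg : forall k m, k != m -> measurable_fun setT (g k m).
  by move=> k m km; case: (hdens k m km).
have hg : forall k m, k != m -> forall A : set R, measurable A ->
  P [set w | A (eps m w - eps k w)] = (\int[lebesgue_measure]_(z in A) (g k m z)%:E)%E.
  by move=> k m km; case: (hdens k m km).
have gG : forall k m, k != m -> forall z, g k m z <= G k m.
  by move=> k m km; case: (hdens k m km).
have EtE : Et = Fb P eps eta := Et_eq meps ieps eta0.
split.
  move=> U; rewrite EtE; split; first exact: (F_diff meps ieps mg g0 hg gG eta0 U).1.
  rewrite (F_grad meps ieps mg g0 hg gG eta0); exact: pv_simplex.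
pose H t := Fb P eps eta (cumul u t).
have xE t : x t = pv P eps eta (cumul u t.-1).
  by rewrite /x EtE (F_grad meps ieps mg g0 hg gG eta0).
have S1 : sup [set dotp y (cumul u T) | y in @simplex R n.+1] <= H T.
  apply: ge_sup.
    exists (dotp (delta_mx 0 ord0) (cumul u T)); exists (delta_mx 0 ord0) => //.
    split => [i|]; first by rewrite mxE ler0n.
    rewrite (bigD1 ord0) //= mxE !eqxx big1 ?addr0 // => j j0.
    by rewrite mxE eqxx /= (negbTE j0).
  move=> r [y [y0 y1] <-]; rewrite /dotp.
  apply: (@le_trans _ _ (\sum_i y 0 i * H T)).
    by apply: ler_sum => i _; apply: ler_wpM2l => //; exact: Fb_ge.
  by rewrite -mulr_suml y1 mul1r.
have H0 : H 0%N <= eta * alpha.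
  rewrite /H (_ : cumul u 0 = 0); last by rewrite /cumul big_geq.
  exact: (Fb0 meps ieps eta0 halpha).
pose L2 := 2 * \sum_i \sum_(j | j != i) G i j.
have step : forall N, (0 < N)%N ->
    sup [set dotp y (cumul u T) | y in @simplex R n.+1]
      - \sum_(1 <= t < T.+1) dotp (x t) (u t)
    <= eta * alpha + T%:R * ((N%:R + 1) / N%:R * L2 * K ^+ 2 / eta).
  move=> N N0.
  have bound : forall k, (0 <= k < T)%N ->
      H k.+1 - H k - dotp (x k.+1) (u k.+1) <= (N%:R + 1) / N%:R * L2 * K ^+ 2 / eta.
    move=> k /andP[_ kT].
    have hK : forall i, `|u k.+1 0 i| <= K by apply: hu; rewrite ltn0Sn /=.
    have := upper meps ieps mg g0 hg gG (fun i => cumul u k 0 i) (dl := fun i => u k.+1 0 i)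
      eta0 N0 hK.
    have -> : H k.+1 = Phi P eps (fun i => cumul u k 0 i + u k.+1 0 i) eta.
      rewrite /H /Fb; congr Phi; apply/funext => i.
      by rewrite /cumul big_nat_recr //= mxE.
    have -> : dotp (x k.+1) (u k.+1) = \sum_i pg P eps (fun i => cumul u k 0 i) eta i * u k.+1 0 i.
      by rewrite xE /dotp; apply: eq_bigr => i _; rewrite mxE.
    by [].
  have tel : H T - H 0%N = \sum_(0 <= k < T) (H k.+1 - H k) by rewrite telescope_sumr.
  have sd : \sum_(1 <= t < T.+1) dotp (x t) (u t) = \sum_(0 <= k < T) dotp (x k.+1) (u k.+1).
    by rewrite big_add1.
  have := ler_sum_nat bound; rewrite sumrB -tel -sd sumr_const_nat subn0.
  move=> Hb; rewrite -mulr_natl in Hb.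
  lra.
have LL : L = L2 by [].
rewrite LL; apply/ler_addgt0Pr => e e0.
set Q := L2 * K ^+ 2 * T%:R / eta.
pose N := (Num.trunc (Q / e)).+1.
have hN : Q / e < N%:R := truncnS_gt _.
have Nn0 : N%:R != 0 :> R by rewrite pnatr_eq0.
have eta_n0 : eta != 0 by rewrite gt_eqF.
have E : T%:R * ((N%:R + 1) / N%:R * L2 * K ^+ 2 / eta) = Q + Q / N%:R.
  by rewrite /Q; field; rewrite Nn0 eta_n0.
have QN : Q / N%:R < e.
  rewrite ltr_pdivrMr ?ltr0n //; move: hN; rewrite ltr_pdivrMr //; lra.
have := step N (ltn0Sn _); rewrite E => h.
lra.
Qed.
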